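(* Let $n$ be even and let $\nu_\mathcal{G}$ be the uniform measure on a finite set $\mathcal{G}$ of two-qudit unitaries (not necessarily closed under inverses), $\mathcal{G}^\dagger$ the set of inverses. Then for every positive integer $t$, $$g\big(\nu^{(n)}_{par}(\mathcal{G})*\nu^{(n)}_{par}(\mathcal{G}^\dagger),t\big)\ge\frac12\,g\big(\nu^{(n)}_{par}(\mathcal{G}\mathcal{G}^\dagger),t\big).$$
   Context: Consider $n$ qudits on a line, each of dimension $d$. For a probability measure $\eta$ on $\mathrm{U}(d^2)$, $\nu^{(n)}_{par}(\eta)$ is the probability measure on $\mathrm{U}(d^n)$ that with probability $1/2$ applies $U_{12}\otimes U_{34}\otimes\cdots\otimes U_{n-1,n}$ and with probability $1/2$ applies $U_{23}\otimes U_{45}\otimes\cdots\otimes U_{n-2,n-1}$ (identity on qudits $1$ and $n$), each $U_{ij}$ drawn independently from $\eta$ and acting on qudits $i,j$. $\nu^{(n)}_{par}(\mathcal{G})$, $\nu^{(n)}_{par}(\mathcal{G}^\dagger)$, $\nu^{(n)}_{par}(\mathcal{G}\mathcal{G}^\dagger)$ correspond to $\eta=\nu_\mathcal{G}$, the uniform measure on $\mathcal{G}^\dagger$, and $\nu_\mathcal{G}*\nu_{\mathcal{G}^\dagger}$. For a probability measure $\nu$ on $\mathrm{U}(D)$: $T_{\nu,t}=\int\mathrm{d}\nu(U)U^{\otimes t}\otimes\bar U^{\otimes t}$, $g(\nu,t)=1-\|T_{\nu,t}-T_{\mu,t}\|_\infty$ with $\mu$ the Haar measure, and $*$ is convolution.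 *)

(* Defs.v *)
From mathcomp Require Import all_boot all_algebra.
From mathcomp Require Import classical_sets reals complex.
Set Implicit Arguments. Unset Strict Implicit. Unset Printing Implicit Defensive.
Import GRing.Theory Num.Theory.
Local Open Scope ring_scope.

Section QuantumDefs.
Variable R : realType.
Local Notation C := (R[i]).

(* Linear operators on C^S, for a finite basis type S, as kernels S -> S -> C. *)
Definition Op (S : finType) := S -> S -> C.
Definition vec (S : finType) := S -> C.

Definition op_mul (S : finType) (A B : Op S) : Op S :=
  fun x y => \sum_(z : S) A x z * B z y.
Definition op_id (S : finType) : Op S := fun x y => (x == y)%:R.
Definition op_adj (S : finType) (A : Op S) : Op S := fun x y => (A y x)^*.
Definition op_sub (S : finType) (A B : Op S) : Op S := fun x y => A x y - B x y.
Definition op_apply (S : finType) (A : Op S) (v : vec S) : vec S :=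
  fun x => \sum_(y : S) A x y * v y.

Definition unitary (S : finType) (U : Op S) : Prop :=
  op_mul U (op_adj U) = @op_id S /\ op_mul (op_adj U) U = @op_id S.

Definition vnorm (S : finType) (v : vec S) : R :=
  Num.sqrt (\sum_(x : S) (complex.Re (v x) ^+ 2 + complex.Im (v x) ^+ 2)).
Definition opnorm (S : finType) (A : Op S) : R :=
  sup [set r : R | exists v : vec S, vnorm v <= 1 /\ r = vnorm (op_apply A v)].

(* Finitely supported probability measures on operators: lists of
   (weight, operator) pairs. *)
Definition fmeasure (S : finType) := seq (C * Op S).

(* Uniform measure on a finite set (given as a duplicate-free list). *)
Definition unif (S : finType) (G : seq (Op S)) : fmeasure S :=
  [seq ((size G)%:R^-1, g) | g <- G].

Definition conv (S : finType) (m1 m2 : fmeasure S) : fmeasure S :=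
  [seq (p.1 * q.1, op_mul p.2 q.2) | p <- m1, q <- m2].

(* Index type of the t-fold moment space (C^S)^{ot} o (C^S)^{ot}. *)
Definition tidx (S : finType) (t : nat) : finType :=
  ({ffun 'I_t -> S} * {ffun 'I_t -> S})%type.

Definition tens (S : finType) (t : nat) (U : Op S) : Op (tidx S t) :=
  fun a b => (\prod_(s < t) U (a.1 s) (b.1 s)) * (\prod_(s < t) (U (a.2 s) (b.2 s))^*).

Definition Tmom (S : finType) (t : nat) (m : fmeasure S) : Op (tidx S t) :=
  fun a b => \sum_(p <- m) p.1 * @tens S t p.2 a b.

(* T_{mu,t} for the Haar measure mu on U(S): the (unique) orthogonal projector
   onto the joint fixed space of all U^{ot} o conj(U)^{ot}, U unitary. *)
Definition haar_moment (S : finType) (t : nat) (P : Op (tidx S t)) : Prop :=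
  op_adj P = P /\ op_mul P P = P /\
  forall v : vec (tidx S t),
    op_apply P v = v <-> (forall U : Op S, unitary U -> op_apply (@tens S t U) v = v).

Definition gap (S : finType) (t : nat) (P : Op (tidx S t)) (m : fmeasure S) : R :=
  1 - opnorm (op_sub (@Tmom S t m) P).

Variables (n d : nat).

Definition qconf : finType := {ffun 'I_n -> 'I_d}.
Definition qq : finType := ('I_d * 'I_d)%type.  (* basis of a two-qudit system *)

(* right neighbour of site i (i itself if i is the last site) *)
Definition nextn (i : 'I_n) : 'I_n := insubd i i.+1.

(* 0-based left ends of the pairs of the two layers:
   layer A: (0,1),(2,3),...,   layer B: (1,2),(3,4),...,(n-3,n-2). *)
Definition pairA : finType := {i : 'I_n | ~~ odd i && (i.+1 < n)%N}.
Definition pairB : finType := {i : 'I_n | odd i && (i.+1 < n)%N}.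
(* sites untouched by layer B (qudits 1 and n in 1-based numbering) *)
Definition idleB (i : 'I_n) : bool := ~~ [exists p : pairB, (val p == i) || (nextn (val p) == i)].

Definition layerA (u : pairA -> Op qq) : Op qconf :=
  fun x y => \prod_(p : pairA) u p (x (val p), x (nextn (val p))) (y (val p), y (nextn (val p))).
Definition layerB (u : pairB -> Op qq) : Op qconf :=
  fun x y => (\prod_(p : pairB) u p (x (val p), x (nextn (val p))) (y (val p), y (nextn (val p))))
           * \prod_(i : 'I_n | idleB i) (x i == y i)%:R.

(* nu_par^{(n)}(eta): with prob. 1/2 layer A, with prob. 1/2 layer B, each gate
   drawn independently from eta. *)
Definition nu_par (eta : fmeasure qq) : fmeasure qconf :=
  [seq (2^-1 * \prod_(p : pairA) (tnth (in_tuple eta) (f p)).1,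
        layerA (fun p => (tnth (in_tuple eta) (f p)).2))
  | f : {ffun pairA -> 'I_(size eta)} <- enum {ffun pairA -> 'I_(size eta)}] ++
  [seq (2^-1 * \prod_(p : pairB) (tnth (in_tuple eta) (f p)).1,
        layerB (fun p => (tnth (in_tuple eta) (f p)).2))
  | f : {ffun pairB -> 'I_(size eta)} <- enum {ffun pairB -> 'I_(size eta)}].

End QuantumDefs.

(* Main.v *)
Require Import Defs.
From mathcomp Require Import all_boot all_algebra.
From mathcomp Require Import boolp classical_sets reals complex.
From mathcomp Require Import ring lra.
Import order.Order.TTheory GRing.Theory Num.Theory.
Set Implicit Arguments. Unset Strict Implicit. Unset Printing Implicit Defensive.
Local Open Scope ring_scope.

Section Basic.
Variable R : realType.
Local Notation C := (R[i]).
Local Notation RC x := (real_complex R x).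
Local Notation Re := complex.Re.
Local Notation Im := complex.Im.

Lemma sqC (z : C) : RC (Re z ^+ 2 + Im z ^+ 2) = z^* * z.
Proof. by rewrite add_Re2_Im2 normCK mulrC. Qed.

Lemma RC_sum (I : Type) (r : seq I) (F : I -> R) : RC (\sum_(i <- r) F i) = \sum_(i <- r) RC (F i).
Proof. by rewrite rmorph_sum. Qed.

Lemma RCK (z : C) : Im z = 0 -> RC (Re z) = z.
Proof. by case: z => a b /= ->. Qed.

Lemma Re_sum (I : Type) (r : seq I) (F : I -> C) : Re (\sum_(i <- r) F i) = \sum_(i <- r) Re (F i).
Proof.
elim: r => [|a r IH]; first by rewrite !big_nil.
by rewrite !big_cons -IH; case: (F a) => ? ?; case: (\sum_(i <- r) F i).
Qed.

Definition nsq (S : finType) (v : vec R S) : R := \sum_(x : S) (Re (v x) ^+ 2 + Im (v x) ^+ 2).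
Definition ip (S : finType) (u v : vec R S) : C := \sum_(x : S) (u x)^* * v x.

Lemma nsq_ge0 S (v : vec R S) : 0 <= nsq v.
Proof. by apply: sumr_ge0 => x _; rewrite addr_ge0 // sqr_ge0. Qed.

Lemma vnormE S (v : vec R S) : vnorm v = Num.sqrt (nsq v).
Proof. by []. Qed.

Lemma vnorm_ge0 S (v : vec R S) : 0 <= vnorm v.
Proof. exact: sqrtr_ge0. Qed.

Lemma nsqC S (v : vec R S) : RC (nsq v) = ip v v.
Proof. by rewrite /nsq /ip rmorph_sum; apply: eq_bigr => x _; apply: sqC. Qed.

Lemma vnorm_eq S T (u : vec R S) (v : vec R T) : ip u u = ip v v -> vnorm u = vnorm v.
Proof. by rewrite -!nsqC => /complexI; rewrite /vnorm /nsq => ->. Qed.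

Lemma CS (I : finType) (a1 a2 b1 b2 : I -> R) :
  (\sum_i (a1 i * b1 i + a2 i * b2 i)) ^+ 2 <=
  (\sum_i (a1 i ^+ 2 + a2 i ^+ 2)) * (\sum_i (b1 i ^+ 2 + b2 i ^+ 2)).
Proof.
set X := \sum_i _; set A := \sum_i _; set B := \sum_i _.
have Q : forall l : R, 0 <= A - 2 * l * X + l ^+ 2 * B.
  move=> l.
  have -> : A - 2 * l * X + l ^+ 2 * B =
            \sum_i ((a1 i - l * b1 i) ^+ 2 + (a2 i - l * b2 i) ^+ 2).
    rewrite /A /X /B !mulr_sumr -sumrN -!big_split /=.
    by apply: eq_bigr => i _; rewrite -mulrA; ring.
  by apply: sumr_ge0 => i _; rewrite addr_ge0 // sqr_ge0.
have B0 : 0 <= B by apply: sumr_ge0 => i _; rewrite addr_ge0 // sqr_ge0.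
have [B0e|Bn0] := eqVneq B 0.
  rewrite B0e mulr0.
  have [X0|Xn0] := eqVneq X 0; first by rewrite X0 expr0n.
  have H := Q ((A + 1) / (2 * X)).
  have E : A - 2 * ((A + 1) / (2 * X)) * X + ((A + 1) / (2 * X)) ^+ 2 * B = -1.
    by rewrite B0e; field; rewrite Xn0.
  by move: H; rewrite E oppr_ge0 ler10.
have Bp : 0 < B by rewrite lt0r Bn0 B0.
have := Q (X / B).
have -> : A - 2 * (X / B) * X + (X / B) ^+ 2 * B = (A * B - X ^+ 2) / B.
  by field.
by rewrite pmulr_lge0 ?invr_gt0 // subr_ge0 mulrC.
Qed.

Lemma vnormD S (u v : vec R S) : vnorm (fun x => u x + v x) <= vnorm u + vnorm v.
Proof.
rewrite !vnormE -(ger0_norm (addr_ge0 (sqrtr_ge0 (nsq u)) (sqrtr_ge0 (nsq v)))).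
rewrite -sqrtr_sqr ler_sqrt ?sqr_ge0 //.
have -> : nsq (fun x => u x + v x) = nsq u + nsq v +
   2 * \sum_x (Re (u x) * Re (v x) + Im (u x) * Im (v x)).
  rewrite /nsq mulr_sumr -!big_split; apply: eq_bigr => x _ /=.
  by case: (u x) => a b; case: (v x) => c e /=; ring.
rewrite sqrrD !sqr_sqrtr ?nsq_ge0 // -addrA -[X in _ <= X]addrA lerD2l.
rewrite addrC lerD2r mulr2n.
suff H : \sum_x (Re (u x) * Re (v x) + Im (u x) * Im (v x)) <=
  Num.sqrt (nsq u) * Num.sqrt (nsq v) by lra.
have := CS (fun x => Re (u x)) (fun x => Im (u x)) (fun x => Re (v x)) (fun x => Im (v x)).
rewrite -/(nsq u) -/(nsq v) -sqrtrM ?nsq_ge0 // => H.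
apply: le_trans (ler_norm _) _.
by rewrite -sqrtr_sqr ler_sqrt ?mulr_ge0 ?nsq_ge0.
Qed.

Definition cabs (c : C) : R := Num.sqrt (Re c ^+ 2 + Im c ^+ 2).

Lemma vnormZ S (c : C) (v : vec R S) : vnorm (fun x => c * v x) = cabs c * vnorm v.
Proof.
rewrite /vnorm /cabs -sqrtrM ?addr_ge0 ?sqr_ge0 //; congr Num.sqrt.
rewrite /nsq mulr_sumr; apply: eq_bigr => x _ /=.
by case: c => a b; case: (v x) => p q /=; ring.
Qed.

Lemma cabsR (c : R) : 0 <= c -> cabs (RC c) = c.
Proof. by move=> c0; rewrite /cabs /= expr0n /= addr0 sqrtr_sqr ger0_norm. Qed.

Lemma vnormZR S (c : R) (v : vec R S) : 0 <= c -> vnorm (fun x => RC c * v x) = c * vnorm v.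
Proof. by move=> c0; rewrite vnormZ cabsR. Qed.

Lemma vnorm0 (S : finType) : vnorm (fun _ : S => 0 : C) = 0.
Proof. by rewrite /vnorm /nsq big1 ?sqrtr0 // => x _; rewrite /= expr0n /= addr0. Qed.

Lemma vnorm_sum S (I : Type) (r : seq I) (f : I -> vec R S) :
  vnorm (fun x => \sum_(i <- r) f i x) <= \sum_(i <- r) vnorm (f i).
Proof.
elim: r => [|a r IH].
  by rewrite big_nil (_ : (fun x => _) = fun _ => 0) ?vnorm0 //; apply: funext => x; rewrite big_nil.
rewrite big_cons (_ : (fun x => _) = fun x => f a x + \sum_(i <- r) f i x); last first.
  by apply: funext => x; rewrite big_cons.
by apply: le_trans (vnormD _ _) _; rewrite lerD2l.
Qed.

Lemma vnorm_eqf S (u v : vec R S) : u =1 v -> vnorm u = vnorm v.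
Proof. by move=> /funext ->. Qed.

Lemma cabs_le S (v : vec R S) y : cabs (v y) <= vnorm v.
Proof.
rewrite /cabs /vnorm ler_sqrt ?nsq_ge0 // /nsq (bigD1 y) //= lerDl.
by apply: sumr_ge0 => x _; rewrite addr_ge0 // sqr_ge0.
Qed.


Lemma op_apply_mul (S : finType) (A B : Op R S) v :
  op_apply (op_mul A B) v = op_apply A (op_apply B v).
Proof.
apply: funext => x; rewrite /op_apply /op_mul.
under eq_bigr do rewrite mulr_suml.
rewrite exchange_big /=; apply: eq_bigr => z _.
by rewrite mulr_sumr; apply: eq_bigr => y _; rewrite mulrA.
Qed.

Lemma sum_delta (S : finType) (y : S) (F : S -> C) :
  \sum_(z : S) (y == z)%:R * F z = F y.
Proof.
rewrite (bigD1 y) //= eqxx mul1r big1 ?addr0 // => z /negPf.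
by rewrite eq_sym => ->; rewrite mul0r.
Qed.

Lemma sum_delta' (S : finType) (y : S) (F : S -> C) :
  \sum_(z : S) F z * (z == y)%:R = F y.
Proof. by rewrite -(sum_delta y); apply: eq_bigr => z _; rewrite mulrC eq_sym. Qed.

Lemma ip_adj (S : finType) (A : Op R S) u w :
  ip (op_apply A u) w = ip u (op_apply (op_adj A) w).
Proof.
rewrite /ip /op_apply /op_adj.
under eq_bigr do rewrite rmorph_sum mulr_suml.
rewrite exchange_big /=; apply: eq_bigr => y _.
rewrite mulr_sumr; apply: eq_bigr => x _.
by rewrite rmorphM /= mulrA [_^* * _]mulrC.
Qed.

Lemma ip_conj (S : finType) (u w : vec R S) : (ip u w)^* = ip w u.
Proof.
by rewrite /ip rmorph_sum; apply: eq_bigr => x _; rewrite rmorphM /= conjCK mulrC.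
Qed.

Lemma unitary_iso (S : finType) (W : Op R S) v :
  unitary W -> vnorm (op_apply W v) = vnorm v.
Proof.
case=> _ H; apply: vnorm_eq.
rewrite ip_adj -op_apply_mul H /ip /op_apply; apply: eq_bigr => x _.
by rewrite /op_id sum_delta.
Qed.

Lemma unitary_adj (S : finType) (U : Op R S) : unitary U -> unitary (op_adj U).
Proof.
have K : op_adj (op_adj U) = U.
  by apply: funext => x; apply: funext => y; rewrite /op_adj conjCK.
by case=> H1 H2; split; rewrite K.
Qed.

Lemma prod_ind (K : finType) (W : eqType) (f g : {ffun K -> W}) :
  \prod_k ((f k == g k)%:R : C) = (f == g)%:R.
Proof.
have [->|ne] := eqVneq f g.
  by rewrite big1 // => k _; rewrite eqxx.
have [k nek] : exists k, f k != g k.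
  by apply/existsP; move: ne; apply: contraR => /existsPn H; apply/eqP/ffunP => k; apply/eqP/negPn/H.
by rewrite (bigD1 k) //= (negPf nek) mul0r.
Qed.

Section Tens.
Variables (S : finType) (t : nat).

Lemma tens_mul (U V : Op R S) : op_mul (tens (t:=t) U) (tens (t:=t) V) = tens (t:=t) (op_mul U V).
Proof.
apply: funext => a; apply: funext => b.
rewrite /tens /op_mul.
under [X in _ = _ * X]eq_bigr do rewrite rmorph_sum.
rewrite !bigA_distr_bigA /= big_distrlr /= pair_big /=.
apply: eq_bigr => [[c1 c2]] _ /=.
rewrite mulrACA -!big_split /=.
by apply: eq_bigr => s _; rewrite rmorphM.
Qed.

Lemma tens_adj (U : Op R S) : op_adj (tens (t:=t) U) = tens (t:=t) (op_adj U).
Proof.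
apply: funext => a; apply: funext => b.
rewrite /tens /op_adj rmorphM !rmorph_prod; congr (_ * _).
Qed.

Lemma tens_id : tens (t:=t) (@op_id R S) = @op_id R (tidx S t).
Proof.
apply: funext => a; apply: funext => b.
rewrite /tens /op_id prod_ind.
under eq_bigr do rewrite conjC_nat.
rewrite prod_ind -natrM mulnb.
by case: a b => [a1 a2] [b1 b2].
Qed.

Lemma tens_unitary (U : Op R S) : unitary U -> unitary (tens (t:=t) U).
Proof.
by case=> H1 H2; split; rewrite tens_adj tens_mul ?H1 ?H2 tens_id.
Qed.

End Tens.

Lemma Tmom_apply (S : finType) t (m : fmeasure R S) v x :
  op_apply (Tmom (t:=t) m) v x = \sum_(p <- m) p.1 * op_apply (tens (t:=t) p.2) v x.
Proof.
rewrite /op_apply /Tmom.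
under eq_bigr do rewrite mulr_suml.
rewrite exchange_big /=; apply: eq_bigr => p _.
by rewrite mulr_sumr; apply: eq_bigr => y _; rewrite mulrA.
Qed.

Lemma Tmom_conv (S : finType) t (m1 m2 : fmeasure R S) :
  Tmom (t:=t) (conv m1 m2) = op_mul (Tmom (t:=t) m1) (Tmom (t:=t) m2).
Proof.
apply: funext => a; apply: funext => b.
rewrite /Tmom /conv big_allpairs_dep /=.
under eq_bigr do under eq_bigr do rewrite -tens_mul.
rewrite /op_mul.
have E : forall c : tidx S t, (\sum_(p <- m1) p.1 * tens p.2 a c) * (\sum_(q <- m2) q.1 * tens q.2 c b)
   = \sum_(p <- m1) \sum_(q <- m2) (p.1 * tens p.2 a c) * (q.1 * tens q.2 c b).
  by move=> c; rewrite mulr_suml; apply: eq_bigr => p _; rewrite mulr_sumr.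
under [RHS]eq_bigr do rewrite E.
rewrite [RHS]exchange_big /=; apply: eq_bigr => p _.
rewrite [RHS]exchange_big /=; apply: eq_bigr => q _.
rewrite mulr_sumr; apply: eq_bigr => c _.
by rewrite mulrACA.
Qed.

End Basic.

Section Good.
Variable R : realType.
Local Notation C := (R[i]).
Local Notation RC x := (real_complex R x).
Local Notation Re := complex.Re.
Local Notation Im := complex.Im.

Definition goodm (S : finType) (m : fmeasure R S) :=
  (forall p, List.In p m -> (Im p.1 = 0 /\ 0 <= Re p.1) /\ unitary p.2) /\
  \sum_(p <- m) p.1 = 1.

Lemma ler_sum_In (I : Type) (m : seq I) (F G : I -> R) :
  (forall p, List.In p m -> F p <= G p) -> \sum_(p <- m) F p <= \sum_(p <- m) G p.
Proof.
elim: m => [|a m IH] H; first by rewrite !big_nil.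
rewrite !big_cons lerD ?H ?IH //=; [by left | by move=> p Hp; apply: H; right].
Qed.

Lemma eq_sum_In (I : Type) (V : nmodType) (m : seq I) (F G : I -> V) :
  (forall p, List.In p m -> F p = G p) -> \sum_(p <- m) F p = \sum_(p <- m) G p.
Proof.
elim: m => [|a m IH] H; first by rewrite !big_nil.
rewrite !big_cons H ?IH //=; [by move=> p Hp; apply: H; right | by left].
Qed.

Lemma good_contr (S : finType) t (m : fmeasure R S) v :
  goodm m -> vnorm (op_apply (Tmom (t:=t) m) v) <= vnorm v.
Proof.
case=> Hm Hs.
rewrite (vnorm_eqf (Tmom_apply m v)).
apply: le_trans (vnorm_sum _ _) _.
have -> : \sum_(p <- m) vnorm (fun x => p.1 * op_apply (tens (t:=t) p.2) v x)
        = \sum_(p <- m) Re p.1 * vnorm v.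
  apply: eq_sum_In => p /Hm [[Hi Hr] Hu].
  rewrite -(RCK Hi) vnormZR // RCK //.
  by rewrite unitary_iso //; apply: tens_unitary.
by rewrite -mulr_suml -Re_sum Hs /= mul1r.
Qed.

Lemma haar_fix (S : finType) t (P : Op R (tidx S t)) (U : Op R S) v :
  haar_moment P -> unitary U ->
  op_apply (tens (t:=t) U) (op_apply P v) = op_apply P v.
Proof.
case=> _ [HPP Hfix] HU.
have H := (Hfix (op_apply P v)).1.
by apply: H => //; rewrite -op_apply_mul HPP.
Qed.

Lemma good_fix (S : finType) t (m : fmeasure R S) (P : Op R (tidx S t)) v :
  goodm m -> haar_moment P ->
  op_apply (Tmom (t:=t) m) (op_apply P v) = op_apply P v.
Proof.
case=> Hm Hs HP; apply: funext => x.
rewrite Tmom_apply.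
rewrite (eq_sum_In (G := fun p => p.1 * op_apply P v x)); last first.
  by move=> p /Hm [_ Hu]; rewrite haar_fix.
by rewrite -mulr_suml Hs mul1r.
Qed.

Lemma ip_expand (S : finType) (w u : vec R S) :
  ip (fun x => w x + u x) (fun x => w x + u x) = ip w w + ip w u + ip u w + ip u u.
Proof.
rewrite /ip -!big_split /=; apply: eq_bigr => x _.
by rewrite rmorphD /=; ring.
Qed.

Lemma proj_contr (S : finType) t (P : Op R (tidx S t)) v :
  haar_moment P -> vnorm (fun x => v x - op_apply P v x) <= vnorm v.
Proof.
move=> HP; have HP' := HP; case: HP' => Hadj [HPP _].
set w := op_apply P v; set u := fun x => v x - w x.
have Pu : op_apply P u = fun _ => 0.
  apply: funext => x; rewrite /u /op_apply.
  under eq_bigr do rewrite mulrBr.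
  rewrite sumrB; rewrite -/(op_apply P v x) -/w.
  by rewrite -/(op_apply P w x) /w -op_apply_mul HPP subrr.
have wu : ip w u = 0.
  by rewrite /w ip_adj Hadj Pu /ip big1 // => x _; rewrite mulr0.
have uw : ip u w = 0 by rewrite -ip_conj wu conjC0.
have vwu : v = fun x => w x + u x.
  by apply: funext => x; rewrite /u addrC subrK.
have E : ip v v = ip w w + ip u u by rewrite {1 2}vwu ip_expand wu uw !addr0.
rewrite !vnormE ler_sqrt ?nsq_ge0 //.
move: E; rewrite -!nsqC -rmorphD => /complexI ->.
by rewrite lerDr nsq_ge0.
Qed.

Lemma op_bounded (S : finType) (M : Op R S) :
  exists K, forall v, vnorm v <= 1 -> vnorm (op_apply M v) <= K.
Proof.
exists (\sum_y vnorm (fun x => M x y)) => v Hv.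
have -> : op_apply M v = fun x => \sum_y v y * M x y.
  by apply: funext => x; apply: eq_bigr => y _; rewrite mulrC.
apply: le_trans (vnorm_sum _ _) _.
apply: ler_sum => y _; rewrite vnormZ.
apply: ler_piMl; first exact: vnorm_ge0.
exact: le_trans (cabs_le v y) Hv.
Qed.

Lemma opnorm_ub (S : finType) (M : Op R S) v :
  vnorm v <= 1 -> vnorm (op_apply M v) <= opnorm M.
Proof.
move=> Hv; rewrite /opnorm.
apply: sup_upper_bound; last by exists v.
split; first by exists (vnorm (op_apply M v)), v.
have [K HK] := op_bounded M.
by exists K => r [w [Hw ->]]; apply: HK.
Qed.

Lemma opnorm_le (S : finType) (M : Op R S) b :
  (forall v, vnorm v <= 1 -> vnorm (op_apply M v) <= b) -> opnorm M <= b.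
Proof.
move=> H; rewrite /opnorm; apply: ge_sup.
  by exists (vnorm (op_apply M (fun _ => 0))), (fun _ => 0); rewrite vnorm0 ler01.
by move=> r [w [Hw ->]]; apply: H.
Qed.

End Good.

Lemma In_nth (T : Type) (x0 : T) (e : seq T) i : (i < size e)%N -> List.In (nth x0 e i) e.
Proof.
elim: e i => [|a e IH] [|i] //= Hi; first by left.
by right; apply: IH.
Qed.

Lemma In_tnth (T : Type) (e : seq T) (i : 'I_(size e)) : List.In (tnth (in_tuple e) i) e.
Proof. by rewrite (tnth_nth (tnth (in_tuple e) i)); apply: In_nth. Qed.

Lemma sum_enum (R : realType) (T : finType) (F : T -> R[i]) :
  \sum_(f <- enum T) F f = \sum_f F f.
Proof. by rewrite big_enum; apply: eq_bigl => f. Qed.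

Definition Lop (R : realType) (S K W V : finType) (r : S -> {ffun K -> W} * V)
  (F : K -> Op R W) : Op R S :=
  fun x y => (\prod_k F k ((r x).1 k) ((r y).1 k)) * ((r x).2 == (r y).2)%:R.

Definition rt (S K W V : finType) (r : S -> {ffun K -> W} * V) t (a : tidx S t) :
  {ffun K -> tidx W t} * tidx V t :=
  ([ffun k => ([ffun s => (r (a.1 s)).1 k], [ffun s => (r (a.2 s)).1 k])],
   ([ffun s => (r (a.1 s)).2], [ffun s => (r (a.2 s)).2])).
Arguments rt {S K W V} r t a.

Section Blocks.
Variable R : realType.
Local Notation C := (R[i]).
Local Notation RC x := (real_complex R x).
Local Notation Re := complex.Re.
Local Notation Im := complex.Im.
Variables (S K W V : finType) (r : S -> {ffun K -> W} * V).


Lemma Lop_adj (F : K -> Op R W) : op_adj (Lop r F) = Lop r (fun k => op_adj (F k)).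
Proof.
apply: funext => x; apply: funext => y.
by rewrite /op_adj /Lop rmorphM rmorph_prod /= conjC_nat eq_sym.
Qed.

Lemma tens_Lop t (F : K -> Op R W) : tens (t:=t) (Lop r F) = Lop (rt r t) (fun k => tens (t:=t) (F k)).
Proof.
apply: funext => a; apply: funext => b.
rewrite /tens /Lop /rt /=.
rewrite !big_split /=.
under [X in _ * X = _]eq_bigr do rewrite rmorphM rmorph_prod /= conjC_nat.
rewrite big_split /=.
rewrite (exchange_big _ _ _ _ _ (fun s k => F k _ _)).
rewrite (exchange_big _ _ _ _ _ (fun s k => (F k _ _)^*)).
rewrite xpair_eqE -mulnb natrM.
rewrite -(@prod_ind R _ _ [ffun s => (r (a.1 s)).2] [ffun s => (r (b.1 s)).2]).
rewrite -(@prod_ind R _ _ [ffun s => (r (a.2 s)).2] [ffun s => (r (b.2 s)).2]).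
rewrite mulrACA -big_split /= -[X in _ = X * _]big_split /=.
congr (_ * _).
  apply: eq_bigr => k _; rewrite !ffunE /=; congr (_ * _).
    by apply: eq_bigr => s _; rewrite !ffunE.
  by apply: eq_bigr => s _; rewrite !ffunE.
by congr (_ * _); apply: eq_bigr => s _; rewrite !ffunE.
Qed.

Hypotheses (rinj : injective r) (rsurj : forall y, exists x, r x = y).

Lemma sum_r (G : {ffun K -> W} * V -> C) : \sum_(z : S) G (r z) = \sum_y G y.
Proof.
have -> : \sum_y G y = \sum_(y in [set r x | x in [set: S]]) G y.
  apply: eq_bigl => y; symmetry; have [x <-] := rsurj y.
  by apply/imsetP; exists x; rewrite ?inE.
rewrite big_imset; last by move=> ? ? _ _ /rinj.
by apply: eq_bigl => x; rewrite inE.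
Qed.

Lemma Lop_mul (F G : K -> Op R W) : op_mul (Lop r F) (Lop r G) = Lop r (fun k => op_mul (F k) (G k)).
Proof.
apply: funext => x; apply: funext => y.
rewrite /op_mul /Lop.
rewrite (sum_r (fun w : {ffun K -> W} * V => ((\prod_k F k ((r x).1 k) (w.1 k)) * ((r x).2 == w.2)%:R) *
                         ((\prod_k G k (w.1 k) ((r y).1 k)) * (w.2 == (r y).2)%:R))).
rewrite -(pair_big xpredT xpredT (fun (g : {ffun K -> W}) (v : V) => ((\prod_k F k ((r x).1 k) (g k)) * ((r x).2 == v)%:R) *
                         ((\prod_k G k (g k) ((r y).1 k)) * (v == (r y).2)%:R))) /=.
have -> : \sum_(g : {ffun K -> W}) \sum_(v : V)
   ((\prod_k F k ((r x).1 k) (g k)) * ((r x).2 == v)%:R) *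
   ((\prod_k G k (g k) ((r y).1 k)) * (v == (r y).2)%:R)
  = (\sum_(g : {ffun K -> W}) \prod_k (F k ((r x).1 k) (g k) * G k (g k) ((r y).1 k))) *
    (\sum_(v : V) ((r x).2 == v)%:R * (v == (r y).2)%:R).
  rewrite mulr_suml; apply: eq_bigr => g _; rewrite mulr_sumr; apply: eq_bigr => v _.
  by rewrite big_split /=; ring.
rewrite sum_delta; congr (_ * _).
by rewrite bigA_distr_bigA.
Qed.

Lemma Lop_id : Lop r (fun _ => @op_id R W) = @op_id R S.
Proof.
apply: funext => x; apply: funext => y.
rewrite /Lop /op_id prod_ind -natrM mulnb -xpair_eqE -!surjective_pairing.
by rewrite (inj_eq rinj).
Qed.

Lemma Lop_unitary (F : K -> Op R W) : (forall k, unitary (F k)) -> unitary (Lop r F).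
Proof.
move=> HF; split; rewrite Lop_adj Lop_mul -[RHS]Lop_id; congr (Lop r _); apply: funext => k;
  by case: (HF k).
Qed.

Lemma rt_inj t : injective (rt r t).
Proof.
move=> [a1 a2] [b1 b2]; rewrite /rt /= => -[/ffunP Ek /ffunP Eh1 /ffunP Eh2].
have E1 : forall s, r (a1 s) = r (b1 s).
  move=> s; rewrite [r (a1 s)]surjective_pairing [r (b1 s)]surjective_pairing; congr (_, _).
    apply/ffunP => k; have := Ek k; rewrite !ffunE => -[/ffunP H _].
    by have := H s; rewrite !ffunE.
  by have := Eh1 s; rewrite !ffunE.
have E2 : forall s, r (a2 s) = r (b2 s).
  move=> s; rewrite [r (a2 s)]surjective_pairing [r (b2 s)]surjective_pairing; congr (_, _).
    apply/ffunP => k; have := Ek k; rewrite !ffunE => -[_ /ffunP H].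
    by have := H s; rewrite !ffunE.
  by have := Eh2 s; rewrite !ffunE.
by congr (_, _); apply/ffunP => s; apply: rinj; rewrite ?E1 ?E2.
Qed.

Lemma rt_surj t y : exists a, rt r t a = y.
Proof.
case: y => G [h1 h2].
have [f1 Hf1] := fin_all_exists (fun s : 'I_t => rsurj ([ffun k => (G k).1 s], h1 s)).
have [f2 Hf2] := fin_all_exists (fun s : 'I_t => rsurj ([ffun k => (G k).2 s], h2 s)).
exists ([ffun s => f1 s], [ffun s => f2 s]); rewrite /rt /=; congr (_, (_, _)).
- apply/ffunP => k; rewrite ffunE [G k]surjective_pairing; congr (_, _);
    apply/ffunP => s; rewrite !ffunE ?Hf1 ?Hf2 /= ffunE //.
- by apply/ffunP => s; rewrite !ffunE Hf1.
- by apply/ffunP => s; rewrite !ffunE Hf2.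
Qed.

Lemma Lop_mom t (e : fmeasure R W) (c : C) :
  Tmom (t:=t) [seq (c * \prod_k (tnth (in_tuple e) (f k)).1,
                    Lop r (fun k => (tnth (in_tuple e) (f k)).2))
              | f : {ffun K -> 'I_(size e)} <- enum {ffun K -> 'I_(size e)}] =
  fun a b => c * Lop (rt r t) (fun _ => Tmom (t:=t) e) a b.
Proof.
apply: funext => a; apply: funext => b.
rewrite /Tmom big_map sum_enum.
under eq_bigr do rewrite tens_Lop /Lop /= -!mulrA [in X in c * X]mulrA -big_split /=.
rewrite -mulr_sumr -mulr_suml; congr (_ * (_ * _)).
under [RHS]eq_bigr do rewrite (big_tnth _ _ e xpredT).
by rewrite bigA_distr_bigA.
Qed.

Lemma Lop_good (e : fmeasure R W) :
  goodm e ->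
  goodm [seq (1 * \prod_k (tnth (in_tuple e) (f k)).1,
                    Lop r (fun k => (tnth (in_tuple e) (f k)).2))
              | f : {ffun K -> 'I_(size e)} <- enum {ffun K -> 'I_(size e)}].
Proof.
case=> He Hs; split.
  move=> p /List.in_map_iff [f [<- _]] /=; split; last first.
    by apply: Lop_unitary => k; case: (He _ (In_tnth (f k))).
  have -> : \prod_k (tnth (in_tuple e) (f k)).1 = RC (\prod_k Re (tnth (in_tuple e) (f k)).1).
    rewrite rmorph_prod; apply: eq_bigr => k _.
    by case: (He _ (In_tnth (f k))) => -[Hi _] _; exact: (esym (RCK Hi)).
  rewrite mul1r /=; split=> //; apply: prodr_ge0 => k _.
  by case: (He _ (In_tnth (f k))) => -[_ Hr] _.
rewrite big_map sum_enum.
under eq_bigr do rewrite mul1r.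
rewrite -(bigA_distr_bigA (fun (k : K) (j : 'I_(size e)) => (tnth (in_tuple e) j).1)) /=.
rewrite big1 // => k _.
by rewrite -(big_tnth _ _ e xpredT (fun p => p.1)).
Qed.

End Blocks.

Lemma nextnE n (i : 'I_n) : (i.+1 < n)%N -> val (nextn i) = i.+1.
Proof. by move=> H; rewrite /nextn val_insubd H. Qed.

Section Line.
Variables (n d : nat) (K : finType) (pv : K -> 'I_n) (idl : pred 'I_n).
Hypotheses (pv_inj : injective pv) (pv_lt : forall k, ((pv k).+1 < n)%N)
  (pv_par : forall k k', odd (pv k) = odd (pv k'))
  (cover : forall i, ~~ idl i -> exists k, (pv k == i) || (nextn (pv k) == i))
  (idl_free : forall i k, idl i -> (pv k != i) && (nextn (pv k) != i)).

Definition rl (z : qconf n d) : {ffun K -> qq d} * {ffun {i | idl i} -> 'I_d} :=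
  ([ffun k => (z (pv k), z (nextn (pv k)))], [ffun s => z (val s)]).

Lemma disj k k' : pv k <> nextn (pv k').
Proof.
move=> E; have := pv_par k k'; rewrite E nextnE //=.
by case: (odd (pv k')).
Qed.

Lemma nextn_inj k k' : nextn (pv k) = nextn (pv k') -> k = k'.
Proof.
move=> E; apply: pv_inj; apply: val_inj; apply: succn_inj.
by rewrite -(nextnE (pv_lt k)) -(nextnE (pv_lt k')) E.
Qed.

Lemma rl_inj : injective rl.
Proof.
move=> x y; rewrite /rl => -[/ffunP Eg /ffunP Eh].
apply/ffunP => i; case: (boolP (idl i)) => Hi.
  by have := Eh (exist _ i Hi); rewrite !ffunE.
have [k /orP [/eqP Hk|/eqP Hk]] := cover Hi; have := Eg k; rewrite !ffunE Hk.
  by case.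
by case.
Qed.

Lemma rl_surj y : exists x, rl x = y.
Proof.
case: y => g h.
have Hs : forall i, exists a : 'I_d,
  (forall s : {i | idl i}, val s = i -> h s = a) /\
  (forall k, pv k = i -> (g k).1 = a) /\ (forall k, nextn (pv k) = i -> (g k).2 = a).
  move=> i; case: (boolP (idl i)) => Hi.
    exists (h (exist _ i Hi)); split; last split.
    - by move=> s Es; rewrite (_ : s = exist _ i Hi) //; apply: val_inj.
    - by move=> k Ek; have := idl_free k Hi; rewrite Ek eqxx.
    - by move=> k Ek; have := idl_free k Hi; rewrite Ek eqxx andbF.
  have [k /orP [/eqP Hk|/eqP Hk]] := cover Hi.
    exists (g k).1; split; last split.
    - by move=> s Es; move: (valP s); rewrite Es (negPf Hi).
    - by move=> k' Ek; have -> // : k' = k; apply: pv_inj; rewrite Ek.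
    - by move=> k' Ek; exfalso; apply: (disj (k := k) (k' := k')); rewrite Ek.
  exists (g k).2; split; last split.
  - by move=> s Es; move: (valP s); rewrite Es (negPf Hi).
  - by move=> k' Ek; exfalso; apply: (disj (k := k') (k' := k)); rewrite Ek.
  - by move=> k' Ek; have -> // : k' = k; apply: nextn_inj; rewrite Ek.
have [f Hf] := fin_all_exists Hs.
exists [ffun i => f i]; rewrite /rl; congr (_, _).
  apply/ffunP => k; rewrite !ffunE [g k]surjective_pairing; congr (_, _).
    by symmetry; case: (Hf (pv k)) => _ [H _]; apply: H.
  by symmetry; case: (Hf (nextn (pv k))) => _ [_ H]; apply: H.
apply/ffunP => s; rewrite !ffunE.
by symmetry; case: (Hf (val s)) => H _; apply: H.
Qed.

End Line.

Section Layers.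
Variables (R : realType) (n d : nat).
Hypothesis neven : ~~ odd n.

Lemma coverA (i : 'I_n) : exists k : pairA n, (val k == i) || (nextn (val k) == i).
Proof.
case: (boolP (odd i)) => Hi.
  have Hj : (i.-1 < n)%N by apply: leq_ltn_trans (leq_pred _) (ltn_ord i).
  have Hi0 : (0 < i)%N by case: (nat_of_ord i) Hi.
  have Hp : ~~ odd (Ordinal Hj) && ((Ordinal Hj).+1 < n)%N.
    rewrite /= prednK // ltn_ord andbT.
    by move: Hi; rewrite -(prednK Hi0) /=.
  exists (exist _ (Ordinal Hj) Hp); apply/orP; right; apply/eqP/val_inj.
  by rewrite nextnE /= prednK //; case/andP: Hp.
have Hlt : (i.+1 < n)%N.
  rewrite ltn_neqAle ltn_ord andbT; apply/negP => /eqP E.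
  by move: neven; rewrite -E /= Hi.
have Hp : ~~ odd i && (i.+1 < n)%N by rewrite Hi Hlt.
by exists (exist _ i Hp); rewrite eqxx.
Qed.

Lemma layerA_rep : exists (V : finType) (r : qconf n d -> {ffun pairA n -> qq d} * V),
  injective r /\ (forall y, exists x, r x = y) /\ forall u, @layerA R n d u = Lop r u.
Proof.
have pv_lt : forall k : pairA n, ((val (val k)).+1 < n)%N by move=> k; case/andP: (valP k).
have pv_par : forall k k' : pairA n, odd (val (val k)) = odd (val (val k')).
  by move=> k k'; case/andP: (valP k) => /negPf -> _; case/andP: (valP k') => /negPf -> _.
have cov : forall i, ~~ (@pred0 'I_n) i -> exists k : pairA n, (val k == i) || (nextn (val k) == i).
  by move=> i _; apply: coverA.
have fr : forall i (k : pairA n), (@pred0 'I_n) i -> (val k != i) && (nextn (val k) != i) by [].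
exists {ffun {i | (@pred0 'I_n) i} -> 'I_d}.
exists (rl (d:=d) (fun k : pairA n => val k) (@pred0 'I_n)).
split; first by apply: rl_inj; first [ exact: val_inj | exact: pv_lt | exact: pv_par | exact: cov | exact: fr ].
split; first by apply: rl_surj; first [ exact: val_inj | exact: pv_lt | exact: pv_par | exact: cov | exact: fr ].
move=> u; apply: funext => x; apply: funext => y.
rewrite /layerA /Lop /rl /=.
have -> : [ffun s : {i | (@pred0 'I_n) i} => x (val s)] == [ffun s => y (val s)].
  by apply/eqP/ffunP => -[i Hi].
by rewrite mulr1; apply: eq_bigr => k _; rewrite !ffunE.
Qed.

Lemma layerB_rep : exists (V : finType) (r : qconf n d -> {ffun pairB n -> qq d} * V),
  injective r /\ (forall y, exists x, r x = y) /\ forall u, @layerB R n d u = Lop r u.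
Proof.
have pv_lt : forall k : pairB n, ((val (val k)).+1 < n)%N by move=> k; case/andP: (valP k).
have pv_par : forall k k' : pairB n, odd (val (val k)) = odd (val (val k')).
  by move=> k k'; case/andP: (valP k) => -> _; case/andP: (valP k') => -> _.
have cov : forall i, ~~ (@idleB n) i -> exists k : pairB n, (val k == i) || (nextn (val k) == i).
  by move=> i; rewrite /idleB negbK => /existsP.
have fr : forall i (k : pairB n), (@idleB n) i -> (val k != i) && (nextn (val k) != i).
  by move=> i k; rewrite /idleB negb_exists => /forallP /(_ k); rewrite negb_or.
exists {ffun {i | (@idleB n) i} -> 'I_d}.
exists (rl (d:=d) (fun k : pairB n => val k) (@idleB n)).
split; first by apply: rl_inj; first [ exact: val_inj | exact: pv_lt | exact: pv_par | exact: cov | exact: fr ].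
split; first by apply: rl_surj; first [ exact: val_inj | exact: pv_lt | exact: pv_par | exact: cov | exact: fr ].
move=> u; apply: funext => x; apply: funext => y.
rewrite /layerB /Lop /rl /=; congr (_ * _).
  by apply: eq_bigr => k _; rewrite !ffunE.
rewrite -(@prod_ind R _ _ [ffun s : {i | (@idleB n) i} => x (val s)] [ffun s => y (val s)]).
rewrite (reindex_omap (val : {i | (@idleB n) i} -> 'I_n) insub); last first.
  by move=> i Hi; rewrite insubT.
apply: eq_big => [[i Hi]|[i Hi] _] /=; last by rewrite !ffunE.
by rewrite Hi insubT /= eqxx.
Qed.

End Layers.

Section Final.
Variable R : realType.
Local Notation C := (R[i]).
Local Notation RC x := (real_complex R x).

Lemma op_apply_lin (S : finType) (M N : Op R S) (c1 c2 : C) v x :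
  op_apply (fun a b => c1 * M a b + c2 * N a b) v x = c1 * op_apply M v x + c2 * op_apply N v x.
Proof.
rewrite /op_apply !mulr_sumr -big_split /=; apply: eq_bigr => y _; ring.
Qed.

Lemma op_apply_linv (S : finType) (M : Op R S) (c1 c2 : C) u w x :
  op_apply M (fun y => c1 * u y + c2 * w y) x = c1 * op_apply M u x + c2 * op_apply M w x.
Proof.
rewrite /op_apply !mulr_sumr -big_split /=; apply: eq_bigr => y _; ring.
Qed.

Lemma op_apply_subv (S : finType) (M : Op R S) u w x :
  op_apply M (fun y => u y - w y) x = op_apply M u x - op_apply M w x.
Proof.
rewrite /op_apply -sumrB; apply: eq_bigr => y _; ring.
Qed.

Lemma op_apply_sub (S : finType) (M N : Op R S) v x :
  op_apply (op_sub M N) v x = op_apply M v x - op_apply N v x.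
Proof.
rewrite /op_apply /op_sub -sumrB; apply: eq_bigr => y _; ring.
Qed.

Lemma sum_const_seq (I : Type) (s : seq I) (c : C) : \sum_(i <- s) c = c *+ size s.
Proof. by elim: s => [|a s IH]; rewrite ?big_nil ?big_cons ?IH ?mulrS. Qed.

Lemma unif_good (S : finType) (Gs : seq (Op R S)) :
  Gs <> [::] -> (forall g, List.In g Gs -> unitary g) -> goodm (unif Gs).
Proof.
move=> Gne Gu; have sz : (size Gs)%:R != 0 :> C.
  by rewrite pnatr_eq0; move: Gne; case: (Gs).
have E : ((size Gs)%:R^-1 : C) = RC ((size Gs)%:R^-1).
  by rewrite fmorphV rmorph_nat.
split.
  move=> p /List.in_map_iff [g [<- Hg]] /=; split; last exact: Gu.
  by rewrite E /= invr_ge0 ler0n.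
by rewrite /unif big_map sum_const_seq -[_^-1 *+ _]mulr_natr mulVf.
Qed.

Lemma h2 : RC (2^-1) = (2^-1 : C).
Proof. by rewrite fmorphV rmorph_nat. Qed.

Lemma vnormD3 (S : finType) (a b c : R) (u v w : vec R S) :
  0 <= a -> 0 <= b -> 0 <= c ->
  vnorm (fun x => RC a * u x + (RC b * v x + RC c * w x)) <=
  a * vnorm u + (b * vnorm v + c * vnorm w).
Proof.
move=> a0 b0 c0.
apply: le_trans (vnormD _ _) _; rewrite vnormZR // lerD2l.
by apply: le_trans (vnormD _ _) _; rewrite !vnormZR.
Qed.

End Final.

Theorem lemma6 (R : realType) (n d : nat) (G : seq (Op R (qq d)))
    (t : nat) (P : Op R (tidx (qconf n d) t)) :
  ~~ odd n ->
  G <> [::] -> List.NoDup G -> (forall g, List.In g G -> unitary g) ->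
  (0 < t)%N ->
  haar_moment P ->
  gap P (conv (@nu_par R n d (unif G)) (@nu_par R n d (unif [seq op_adj g | g <- G])))
  >= 2^-1 * gap P (@nu_par R n d (conv (unif G) (unif [seq op_adj g | g <- G]))).
Proof.
move=> neven Gne _ Gu _ HP.
set eG := unif G; set eH := unif [seq op_adj g | g <- G].
have goodG : goodm eG by apply: unif_good.
have goodH : goodm eH.
  apply: unif_good; first by move: Gne; case: (G).
  by move=> g /List.in_map_iff [h [<- Hh]]; apply: unitary_adj; apply: Gu.
have [VA [rA [rAi [rAs HA]]]] := layerA_rep R d neven.
have [VB [rB [rBi [rBs HB]]]] := layerB_rep R n d.
have HA' : @layerA R n d = Lop rA by apply: funext => u; apply: HA.
have HB' : @layerB R n d = Lop rB by apply: funext => u; apply: HB.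
pose LA (e : fmeasure R (qq d)) := Lop (rt rA t) (fun _ => Tmom (t:=t) e).
pose LB (e : fmeasure R (qq d)) := Lop (rt rB t) (fun _ => Tmom (t:=t) e).
have nuE : forall e, Tmom (t:=t) (nu_par n e) = fun a b => 2^-1 * LA e a b + 2^-1 * LB e a b.
  move=> e; rewrite /nu_par HA' HB'.
  apply: funext => a; apply: funext => b.
  have EA := congr1 (fun F => F a b) (Lop_mom rA t e (2^-1)).
  have EB := congr1 (fun F => F a b) (Lop_mom rB t e (2^-1)).
  rewrite {1}/Tmom in EA; rewrite {1}/Tmom in EB; rewrite {1}/Tmom big_cat EA EB.
  by [].
have LAE : forall e, LA e = Tmom (t:=t) [seq (1 * \prod_k (tnth (in_tuple e) (f k)).1,
      Lop rA (fun k => (tnth (in_tuple e) (f k)).2)) | f : {ffun pairA n -> 'I_(size e)} <- enum {ffun pairA n -> 'I_(size e)}].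
  move=> e; rewrite Lop_mom; apply: funext => a; apply: funext => b; by rewrite mul1r.
have LBE : forall e, LB e = Tmom (t:=t) [seq (1 * \prod_k (tnth (in_tuple e) (f k)).1,
      Lop rB (fun k => (tnth (in_tuple e) (f k)).2)) | f : {ffun pairB n -> 'I_(size e)} <- enum {ffun pairB n -> 'I_(size e)}].
  move=> e; rewrite Lop_mom; apply: funext => a; apply: funext => b; by rewrite mul1r.
have gA : forall e, goodm e -> forall v, vnorm (op_apply (LA e) v) <= vnorm v.
  by move=> e He v; rewrite LAE; apply: good_contr; apply: Lop_good.
have gB : forall e, goodm e -> forall v, vnorm (op_apply (LB e) v) <= vnorm v.
  by move=> e He v; rewrite LBE; apply: good_contr; apply: Lop_good.
have fA : forall e, goodm e -> forall v, op_apply (LA e) (op_apply P v) = op_apply P v.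
  by move=> e He v; rewrite LAE; apply: good_fix => //; apply: Lop_good.
have fB : forall e, goodm e -> forall v, op_apply (LB e) (op_apply P v) = op_apply P v.
  by move=> e He v; rewrite LBE; apply: good_fix => //; apply: Lop_good.
have cA : forall e1 e2, LA (conv e1 e2) = op_mul (LA e1) (LA e2).
  by move=> e1 e2; rewrite /LA Tmom_conv (Lop_mul (rt_inj (t:=t) rAi) (rt_surj (t:=t) rAs)).
have cB : forall e1 e2, LB (conv e1 e2) = op_mul (LB e1) (LB e2).
  by move=> e1 e2; rewrite /LB Tmom_conv (Lop_mul (rt_inj (t:=t) rBi) (rt_surj (t:=t) rBs)).
have Xb : opnorm (op_sub (Tmom (t:=t) (conv (nu_par n eG) (nu_par n eH))) P) <=
    2^-1 * opnorm (op_sub (Tmom (t:=t) (nu_par n (conv eG eH))) P) + 2^-1.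
  apply: opnorm_le => v Hv.
  set Y := op_sub (Tmom (t:=t) (nu_par n (conv eG eH))) P.
  set w1 := fun x => op_apply (LA eG) (op_apply (LB eH) v) x - op_apply P v x.
  set w2 := fun x => op_apply (LB eG) (op_apply (LA eH) v) x - op_apply P v x.
  have key : forall x, op_apply (op_sub (Tmom (t:=t) (conv (nu_par n eG) (nu_par n eH))) P) v x
     = real_complex R (2^-1) * op_apply Y v x + (real_complex R (2^-1 * 2^-1) * w1 x +
                                               real_complex R (2^-1 * 2^-1) * w2 x).
    move=> x; rewrite op_apply_sub Tmom_conv !nuE op_apply_mul op_apply_lin.
    have -> : op_apply (fun a b => 2^-1 * LA eH a b + 2^-1 * LB eH a b) v =
              fun y => 2^-1 * op_apply (LA eH) v y + 2^-1 * op_apply (LB eH) v y.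
      by apply: funext => y; apply: op_apply_lin.
    rewrite !op_apply_linv /Y op_apply_sub nuE cA cB op_apply_lin !op_apply_mul /w1 /w2.
    rewrite rmorphM /= h2.
    have h2' : (2 : R[i]) != 0 by rewrite pnatr_eq0.
    by field.
  rewrite (vnorm_eqf key).
  have n1 : vnorm w1 <= 1.
    have -> : w1 = op_apply (LA eG) (op_apply (LB eH) (fun z => v z - op_apply P v z)).
      apply: funext => x; rewrite /w1.
      have -> : op_apply (LB eH) (fun z => v z - op_apply P v z) =
                fun y => op_apply (LB eH) v y - op_apply P v y.
        by apply: funext => y; rewrite op_apply_subv fB.
      by rewrite op_apply_subv fA.
    apply: le_trans (gA _ goodG _) _; apply: le_trans (gB _ goodH _) _.
    exact: le_trans (proj_contr _ HP) Hv.
  have n2 : vnorm w2 <= 1.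
    have -> : w2 = op_apply (LB eG) (op_apply (LA eH) (fun z => v z - op_apply P v z)).
      apply: funext => x; rewrite /w2.
      have -> : op_apply (LA eH) (fun z => v z - op_apply P v z) =
                fun y => op_apply (LA eH) v y - op_apply P v y.
        by apply: funext => y; rewrite op_apply_subv fA.
      by rewrite op_apply_subv fB.
    apply: le_trans (gB _ goodG _) _; apply: le_trans (gA _ goodH _) _.
    exact: le_trans (proj_contr _ HP) Hv.
  have nY := opnorm_ub Y Hv.
  have h0 : (0 : R) <= 2^-1 by rewrite invr_ge0 ler0n.
  apply: le_trans (vnormD3 _ _ _ h0 (mulr_ge0 h0 h0) (mulr_ge0 h0 h0)) _.
  have nw1 := vnorm_ge0 w1; have nw2 := vnorm_ge0 w2.
  have nYv := vnorm_ge0 (op_apply Y v).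
  lra.
rewrite /gap; lra.
Qed.
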